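(* Let $d\ge1$, $\alpha_i\in(0,1/i]$ for all $i\in[d+1]$, $P=\mathbb Z_{\ge0}^{d+1}$, and let $t>\exp^{(5d+4)}(1)$ be an integer. Fix reals $a_u$ ($u\in L_t$) and extend them by $a_v:=\sum_{u\in L_t}p(v\to u)a_u$ for $v\in L_m$, $0\le m\le t$. For $j\in[d+1]$ let $\lambda_j:=\lfloor\log^{(2d+2-2j)}(t)\rfloor$ and for $i\in[d+1]$ let $S_j^{\ge i}$ be the set of elements of $L_{\lambda_j}$ with at least $i$ positive entries. Then for all $i,j_1,j_2\in[d+1]$ with $j_1<j_2$, $$\sum_{u\in S_{j_1}^{\ge i}}|a_u|\le\sum_{u\in S_{j_2}^{\ge i}}|a_u|.$$
   Context: Finite model: $P=\mathbb{Z}_{\ge0}^{d+1}$ with $u\le v$ iff $v-u\in\mathbb{Z}_{\ge0}^{d+1}$; $L_t$ = tuples with coordinate sum $t$; $\mathfrak p(v)$ = set of elements covered by $v$, so $|\mathfrak p(v)|$ is the number of positive coordinates of $v$. Path weights: each covering pair $u\lessdot v$ gives a directed edge $u\to v$ of weight $\alpha_{|\mathfrak p(v)|}$; $p(u\to v)$ is the sum over all directed paths from $u$ to $v$ of the product of edge weights, with $p(v\to v)=1$ and $p(u\to v)=0$ if $u\not\le v$. Notation: $\log^{(k)}$ and $\exp^{(k)}$ denote $k$-fold iterates ($\log^{(0)}$ is the identity). *)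

(* Defs.v *)
From HB Require Import structures.
From mathcomp Require Import all_boot all_order all_algebra.
From mathcomp Require Import all_classical all_reals all_analysis.
Set Implicit Arguments. Unset Strict Implicit. Unset Printing Implicit Defensive.
Import Order.TTheory GRing.Theory Num.Theory.
Local Open Scope ring_scope.

Definition pt (d : nat) := {ffun 'I_d.+1 -> nat}.

Definition ptsum d (v : pt d) : nat := (\sum_(k < d.+1) v k)%N.

Definition npos d (v : pt d) : nat := #|[set k | (0 < v k)%N]|.

(* L_m as an (duplicate-free) enumeration *)
Definition ptof d m (f : {ffun 'I_d.+1 -> 'I_m.+1}) : pt d :=
  [ffun k => nat_of_ord (f k)].

Definition level (d m : nat) : seq (pt d) :=
  map (@ptof d m)
    [seq f : {ffun 'I_d.+1 -> 'I_m.+1} <- enum {: {ffun 'I_d.+1 -> 'I_m.+1}} |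
       (\sum_(k < d.+1) nat_of_ord (f k))%N == m].

Definition step d (u : pt d) (k : 'I_d.+1) : pt d :=
  [ffun i => (u i + (i == k))%N].

Definition walk d (u : pt d) (s : seq 'I_d.+1) : pt d := foldl (@step d) u s.

Definition pathw (R : nzRingType) d (alpha : nat -> R) (u : pt d) (s : seq 'I_d.+1) : R :=
  \prod_(i < size s) alpha (npos (walk u (take i.+1 s))).

(* p(u -> v): sum over all directed paths from u to v (a path is determined by its
   sequence of steps, whose length is necessarily ptsum v - ptsum u);
   gives 1 when u = v and 0 when u is not <= v *)
Definition pw (R : nzRingType) d (alpha : nat -> R) (u v : pt d) : R :=
  \sum_(s : (ptsum v - ptsum u).-tuple 'I_d.+1 | walk u s == v) pathw alpha u s.

Definition ext (R : nzRingType) d (alpha : nat -> R) (t : nat) (a : pt d -> R) (v : pt d) : R :=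
  \sum_(u <- level d t) pw alpha v u * a u.

Definition lam (R : realType) (d t j : nat) : nat :=
  Num.truncn (iter (2 * d + 2 - 2 * j) (@ln R) (t%:R)).

(* Main.v *)
Require Import Defs.
From HB Require Import structures.
From mathcomp Require Import all_boot all_order all_algebra.
From mathcomp Require Import all_classical all_reals all_analysis.
Import Order.TTheory GRing.Theory Num.Theory.
Local Open Scope ring_scope.

Lemma sum_tupleS (R : nzRingType) (T : finType) n (F : n.+1.-tuple T -> R) :
  \sum_(s : n.+1.-tuple T) F s = \sum_(k : T) \sum_(s : n.-tuple T) F [tuple of k :: s].
Proof.
rewrite pair_big /=.
rewrite (reindex (fun p : T * n.-tuple T => [tuple of p.1 :: p.2])) //=.
exists (fun s : n.+1.-tuple T => (thead s, [tuple of behead s])).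
  by move=> [k s] _ /=; rewrite theadE; congr pair; apply: val_inj.
by move=> s _ /=; rewrite [RHS]tuple_eta.
Qed.

Lemma ptsum_step d (v : pt d) k : ptsum (step v k) = (ptsum v).+1.
Proof.
rewrite /ptsum.
rewrite (eq_bigr (fun i => v i + (i == k))%N); last by move=> i _; rewrite ffunE.
rewrite big_split /= -[(\sum_(k < d.+1) v k).+1]addn1; congr (_ + _)%N.
rewrite (bigD1 k) //= eqxx big1 //.
by move=> i /negbTE ->.
Qed.

Lemma pathw_cons (R : nzRingType) d (alpha : nat -> R) (v : pt d) k s :
  pathw alpha v (k :: s) = alpha (npos (step v k)) * pathw alpha (step v k) s.
Proof.
rewrite /pathw big_ord_recl /= take0.
by [].
Qed.

Lemma pw_rec (R : nzRingType) d (alpha : nat -> R) (v u : pt d) :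
  (ptsum v < ptsum u)%N ->
  pw alpha v u = \sum_k alpha (npos (step v k)) * pw alpha (step v k) u.
Proof.
move=> lt; rewrite /pw.
have E : (ptsum u - ptsum v = (ptsum u - ptsum v).-1.+1)%N.
  by rewrite prednK // subn_gt0.
move: E; set n := (ptsum u - ptsum v).-1 => E.
rewrite E big_mkcond sum_tupleS.
apply: eq_bigr => k _.
rewrite ptsum_step subnS E /= big_distrr /= [RHS]big_mkcond.
apply: eq_bigr => s _ /=.
rewrite pathw_cons.
by case: ifP; rewrite ?mulr0.
Qed.

Lemma mem_level d m (u : pt d) : (u \in level d m) = (ptsum u == m).
Proof.
apply/mapP/eqP.
  move=> [f]; rewrite mem_filter => /andP[/eqP hs _] ->.
  by rewrite /ptsum; under eq_bigr do rewrite ffunE.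
move=> hs.
have hk : forall k, (u k <= m)%N.
  move=> k; rewrite -hs /ptsum (bigD1 k) //=; exact: leq_addr.
exists [ffun k => (inord (u k) : 'I_m.+1)].
  rewrite mem_filter mem_enum andbT; apply/eqP.
  rewrite -[RHS]hs /ptsum; apply: eq_bigr => k _.
  by rewrite ffunE inordK // ltnS.
by apply/ffunP => k; rewrite !ffunE inordK // ltnS.
Qed.

Lemma uniq_level d m : uniq (level d m).
Proof.
rewrite map_inj_uniq; first by rewrite filter_uniq //; have := @enum_uniq {ffun 'I_d.+1 -> 'I_m.+1} predT; rewrite enumT; exact.
move=> f g E; apply/ffunP => k; apply: val_inj.
by have := congr1 (fun h : pt d => h k) E; rewrite !ffunE.
Qed.

Lemma ext_rec (R : nzRingType) d (alpha : nat -> R) t (a : pt d -> R) (v : pt d) :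
  (ptsum v < t)%N ->
  ext alpha t a v = \sum_k alpha (npos (step v k)) * ext alpha t a (step v k).
Proof.
move=> lt; rewrite /ext.
under [RHS]eq_bigr do rewrite big_distrr.
rewrite exchange_big /= big_seq [RHS]big_seq.
apply: eq_bigr => u; rewrite mem_level => /eqP hu.
rewrite pw_rec ?hu // big_distrl; apply: eq_bigr => k _ /=.
by rewrite mulrA.
Qed.

Lemma npos_step d (v : pt d) k : (npos v <= npos (step v k))%N.
Proof.
rewrite /npos; apply: subset_leq_card; apply/fintype.subsetP => j; rewrite !inE ffunE => h.
exact: leq_trans h (leq_addr _ _).
Qed.

Lemma npos_le d (v : pt d) : (npos v <= d.+1)%N.
Proof. by rewrite /npos -[X in (_ <= X)%N]card_ord max_card. Qed.

Lemma step_inj d k : injective (fun v : pt d => step v k).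
Proof.
move=> v w E; apply/ffunP => j.
have := congr1 (fun h : pt d => h j) E; rewrite !ffunE; exact: addIn.
Qed.

Lemma level_map d m k :
  @perm_eq (pt d) (map (fun v : pt d => step v k) (level d m))
          [seq w <- level d m.+1 | (0 < (w : pt d) k)%N].
Proof.
apply: uniq_perm.
- by rewrite (map_inj_uniq (@step_inj d k)) uniq_level.
- by rewrite filter_uniq // uniq_level.
move=> w; rewrite mem_filter; apply/mapP/andP.
  move=> [v hv ->]; rewrite mem_level ptsum_step.
  by rewrite mem_level in hv; rewrite (eqP hv) ffunE eqxx addn1.
move=> [hk hs].
have E : step [ffun j => (w j - (j == k))%N] k = w.
  apply/ffunP => j; rewrite !ffunE; case: eqP => [->|_].
    by rewrite subnK.
  by rewrite subn0 addn0.
exists [ffun j => (w j - (j == k))%N] => //.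
by rewrite mem_level -eqSS -(ptsum_step _ _ k) E -mem_level.
Qed.

Lemma npos_step_gt0 d (v : pt d) k : (0 < npos (step v k))%N.
Proof.
rewrite /npos card_gt0; apply/set0Pn; exists k.
by rewrite inE ffunE eqxx addn1.
Qed.

Lemma mono (R : realType) d (alpha : nat -> R) t (a : pt d -> R) i m :
  (forall q, (1 <= q <= d.+1)%N -> 0 <= alpha q /\ alpha q * q%:R <= 1) ->
  (1 <= i)%N -> (m < t)%N ->
  \sum_(v <- level d m | (i <= npos v)%N) `|ext alpha t a v|
  <= \sum_(w <- level d m.+1 | (i <= npos w)%N) `|ext alpha t a w|.
Proof.
move=> Ha i1 mt.
have Hpos : forall w : pt d, (1 <= npos w)%N -> 0 <= alpha (npos w).
  by move=> w h; case: (Ha (npos w)); rewrite ?h ?npos_le.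
set H := fun w : pt d => alpha (npos w) * `|ext alpha t a w|.
have H0 : forall v k, 0 <= H (step v k).
  by move=> v k; rewrite /H mulr_ge0 ?Hpos ?npos_step_gt0.
apply: (le_trans (y := \sum_(v <- level d m | (i <= npos v)%N) \sum_k H (step v k))).
  rewrite big_seq_cond [X in _ <= X]big_seq_cond.
  apply: ler_sum => v /andP[hv _].
  rewrite ext_rec; last by rewrite mem_level in hv; rewrite (eqP hv).
  apply: (le_trans (ler_norm_sum _ _ _)); apply: ler_sum => k _.
  by rewrite normrM ger0_norm ?Hpos ?npos_step_gt0.
rewrite exchange_big /=.
apply: (le_trans (y := \sum_k \sum_(w <- level d m.+1 | (i <= npos w)%N)
                         (if (0 < w k)%N then H w else 0))).
  apply: ler_sum => k _.
  apply: (le_trans (y := \sum_(v <- level d m | (i <= npos (step v k))%N) H (step v k))).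
    rewrite big_mkcond [X in _ <= X]big_mkcond; apply: ler_sum => v _.
    case: ifP => h1; last by case: ifP.
    by rewrite (leq_trans h1 (npos_step _ v k)).
  rewrite -(big_map (fun v => step v k) (fun w => (i <= npos w)%N) H).
  rewrite (perm_big _ (level_map d m k)) big_filter_cond.
  by rewrite -big_mkcondr; under eq_bigl do rewrite andbC.
rewrite exchange_big /= big_seq_cond [X in _ <= X]big_seq_cond.
apply: ler_sum => w /andP[_ hw].
rewrite -big_mkcond /= sumr_const.
have -> : #|[pred k | (0 < w k)%N]| = npos w by rewrite /npos cardsE.
rewrite /H -mulr_natr mulrAC.
have hq : (1 <= npos w <= d.+1)%N by rewrite (leq_trans i1 hw) npos_le.
case: (Ha _ hq) => _ h; apply: ler_piMl => //.
Qed.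

Lemma trunc_ln (R : realType) (x : R) : (Num.truncn (ln x) <= Num.truncn x)%N.
Proof.
case: (lerP x 0) => hx; first by rewrite ln0 // truncn0.
apply: le_truncn.
have := expR_ge1Dx (ln x); rewrite lnK ?posrE // => h.
by apply: le_trans h; rewrite lerDr.
Qed.

Lemma lam_mono (R : realType) (x : R) k n :
  (Num.truncn (iter (k + n) (@ln R) x) <= Num.truncn (iter k (@ln R) x))%N.
Proof.
elim: n => [|n IH]; first by rewrite addn0.
by rewrite addnS iterS (leq_trans (trunc_ln _ _) IH).
Qed.

Lemma chain (R : realType) d (alpha : nat -> R) t (a : pt d -> R) i m n :
  (forall q, (1 <= q <= d.+1)%N -> 0 <= alpha q /\ alpha q * q%:R <= 1) ->
  (1 <= i)%N -> (m + n <= t)%N ->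
  \sum_(v <- level d m | (i <= npos v)%N) `|ext alpha t a v|
  <= \sum_(w <- level d (m + n) | (i <= npos w)%N) `|ext alpha t a w|.
Proof.
move=> Ha i1; elim: n => [|n IH] h; first by rewrite addn0.
have h' : (m + n <= t)%N by apply: leq_trans h; rewrite addnS.
apply: (le_trans (IH h')).
by rewrite addnS; apply: mono => //; rewrite -addnS.
Qed.

Theorem mainTheorem9 (R : realType) (d : nat) (alpha : nat -> R) (t : nat)
    (a : pt d -> R) :
  (1 <= d)%N ->
  (forall i : nat, (1 <= i <= d.+1)%N -> 0 < alpha i /\ alpha i <= (i%:R)^-1) ->
  iter (5 * d + 4) (@expR R) 1 < t%:R ->
  forall i j1 j2 : nat,
    (1 <= i <= d.+1)%N -> (1 <= j1)%N -> (j1 < j2)%N -> (j2 <= d.+1)%N ->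
    \sum_(u <- level d (lam R d t j1) | (i <= npos u)%N) `|ext alpha t a u|
      <= \sum_(u <- level d (lam R d t j2) | (i <= npos u)%N) `|ext alpha t a u|.
Proof.
move=> _ Hal _ i j1 j2 /andP[i1 _] _ j12 j2d.
have Ha : forall q, (1 <= q <= d.+1)%N -> 0 <= alpha q /\ alpha q * q%:R <= 1.
  move=> q hq; case: (Hal q hq) => h1 h2; split; first exact: ltW.
  have q0 : (0 < q)%N by case/andP: hq.
  by rewrite -ler_pdivlMr ?ltr0n // div1r.
set k2 := (2 * d + 2 - 2 * j2)%N.
set k1 := (2 * d + 2 - 2 * j1)%N.
have k21 : (k2 <= k1)%N.
  by rewrite /k1 /k2 leq_sub2l // leq_mul2l /= ltnW.
have E1 : lam R d t j1 = Num.truncn (iter (k2 + (k1 - k2)) (@ln R) t%:R).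
  by rewrite subnKC.
have l12 : (lam R d t j1 <= lam R d t j2)%N by rewrite E1; exact: lam_mono.
have l2t : (lam R d t j2 <= t)%N.
  have := lam_mono _ (t%:R : R) 0 k2; rewrite add0n /= => h.
  rewrite /lam (leq_trans h) // truncn_le_nat ltr_nat //.
rewrite -(subnKC l12); apply: chain => //.
by rewrite subnKC.
Qed.
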